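(* Consider the MSSN-MC-HC problem with costs $c_s>0$, $c_r>0$, and suppose $\frac{c_s}{c_r}\ge\overline{m}(\overline{m}+1)(h_{\max}-1)$ for some integer $\overline{m}$ with $1\le\overline{m}<m$, where $m=|Q|$. Then on every feasible instance, the approximation ratio of SmartSelect (cost of its output divided by the optimum cost) is at most $$\max\Big\{\epsilon+\frac{m}{\overline{m}},\ \frac{m}{2}\Big(1+\frac{1}{\overline{m}(\overline{m}+1)}\Big)\Big\},$$ where $\epsilon\in[0,1)$ is defined by $\lceil\frac{m}{\overline{m}+1}\rceil=\frac{m}{\overline{m}+1}+\epsilon$.
   Context: MSSN-MC-HC problem: given a finite undirected graph $G=(V,E)$ with $V=Q\cup R\cup B$ (pairwise disjoint; $Q$ = sources, $R$ = potential relay locations, $B$ = potential sink locations), costs $c_s$ per sink and $c_r$ per relay, and a positive integer $h_{\max}$, select $B'\subseteq B$, $R'\subseteq R$ such that in the subgraph induced by $Q\cup R'\cup B'$ every source has a path of at most $h_{\max}$ edges to some sink of $B'$ (a feasible solution), minimizing $c_s|B'|+c_r|R'|$. An instance is feasible if a feasible solution exists. SmartSelect algorithm: (1) If for some $b\in B$ every source has a path of at most $h_{\max}$ edges to $b$ in the subgraph induced by $Q\cup B$, output $(\{b\},\emptyset)$. (2) If some source has no path of at most $h_{\max}$ edges in $G$ to any sink, declare infeasible. (3) For each $b_i\in B$ let $Q_i$ be the set of sources whose shortest path to $b_i$ in $G$ has at most $h_{\max}$ edges, and $R_i$ the set of relays whose shortest path to $b_i$ has at most $h_{\max}-1$ edges.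 (4) Greedy phase, iterations $j=0,1,\dots$: $B^{(0)}=B$, $Q_i^{(0)}=Q_i$; $B^{(j)}$ is the set of sinks not yet picked and $Q_i^{(j)}$ the set of sources of $Q_i$ not yet covered. In iteration $j$, for each $b_i\in B^{(j)}$, a relay-selection subroutine (e.g. the SPTiRP algorithm) applied to the subgraph of $G$ induced by $Q_i^{(j)}\cup R_i\cup\{b_i\}$ returns a set $\hat R_i^{(j)}\subseteq R_i$ consisting of the relays on one chosen path of at most $h_{\max}$ edges from each source of $Q_i^{(j)}$ to $b_i$. Let $n_i^{(j)}$ be the number of relays in $\hat R_i^{(j)}$ not selected in earlier iterations (earlier-selected relays have cost zero thereafter), and $C_i^{(j)}=\frac{c_s+c_r n_i^{(j)}}{|Q_i^{(j)}|}$. The sink $b_i$ with least $C_i^{(j)}$ is picked (ties broken in favor of larger $|Q_i^{(j)}|$), its sources $Q_i^{(j)}$ become covered and the relays $\hat R_i^{(j)}$ are selected. Stop when all sources are covered; output the picked sinks and selected relays. *)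

(* Defs.v *)
From HB Require Import structures.
From mathcomp Require Import all_boot all_order all_algebra.
Set Implicit Arguments. Unset Strict Implicit. Unset Printing Implicit Defensive.
Import Order.TTheory GRing.Theory Num.Theory.
Local Open Scope ring_scope.

Section MSSN.
Variable V : finType.
Variable e : rel V.
Variable h : nat.

Definition reach_in (S : {set V}) (k : nat) (x y : V) : bool :=
  [exists n : 'I_k.+1, [exists t : n.-tuple V,
     let p := val t in
     [&& path e x p, last x p == y, uniq (x :: p)
       & all (fun v => v \in S) (x :: p)]]].

Definition feasible_sol (Q R B B' R' : {set V}) : Prop :=
  [/\ B' \subset B, R' \subset R &
      forall q, q \in Q -> exists2 b, b \in B' & reach_in (Q :|: R' :|: B') h q b].

Definition feasible_instance (Q R B : {set V}) : Prop :=
  exists B' R', feasible_sol Q R B B' R'.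

(* Q_i and R_i of step (3) for sink b (shortest paths in G). *)
Definition Qset (Q : {set V}) (b : V) : {set V} :=
  [set q in Q | reach_in setT h q b ].
Definition Rset (R : {set V}) (b : V) : {set V} :=
  [set r in R | reach_in setT h.-1 r b ].

(* Rhat is a possible output of the relay-selection subroutine on the subgraph
   induced by Qj :|: Ri :|: [set b]: the relays on one chosen path of at most
   h edges from each source of Qj to b. *)
Definition valid_relays (Qj Ri : {set V}) (b : V) (Rhat : {set V}) : Prop :=
  exists f : V -> seq V,
    (forall q, q \in Qj ->
       [&& path e q (f q), last q (f q) == b, uniq (q :: f q),
           all (fun v => v \in Qj :|: Ri :|: [set b]) (q :: f q)
         & (size (f q) <= h)%N]) /\
    Rhat = [set r in Ri | [exists q in Qj, r \in f q]].

(* State of the greedy phase: (picked sinks, selected relays, covered sources). *)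
Definition gstate := ({set V} * {set V} * {set V})%type.

Section Greedy.
Variable K : archiRealFieldType.
Variables (cs cr : K) (Q R B : {set V}).

Definition Qj (C : {set V}) (b : V) : {set V} := Qset Q b :\: C.

Definition candidate (P C : {set V}) (b : V) : bool :=
  (b \in B :\: P) && (Qj C b != set0).

Definition Ccost (Sr C : {set V}) (b : V) (Rhat : {set V}) : K :=
  (cs + cr * #|Rhat :\: Sr|%:R) / #|Qj C b|%:R.

Definition greedy_step (st st' : gstate) : Prop :=
  let: (P, Sr, C) := st in
  exists (rho : V -> {set V}) (bs : V),
    [/\ forall b, candidate P C b -> valid_relays (Qj C b) (Rset R b) b (rho b),
        candidate P C bs,
        (forall b, candidate P C b ->
           Ccost Sr C bs (rho bs) < Ccost Sr C b (rho b) \/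
           (Ccost Sr C bs (rho bs) = Ccost Sr C b (rho b) /\
            (#|Qj C b| <= #|Qj C bs|)%N)) &
        st' = (bs |: P, Sr :|: rho bs, C :|: Qj C bs)].

Inductive greedy_reach : gstate -> gstate -> Prop :=
| gr_refl st : greedy_reach st st
| gr_step st st' st'' : greedy_step st st' -> greedy_reach st' st'' ->
                        greedy_reach st st''.

Definition step1_sink (b : V) : Prop :=
  b \in B /\ forall q, q \in Q -> reach_in (Q :|: B) h q b.

Definition step2_infeasible : Prop :=
  exists2 q, q \in Q & forall b, b \in B -> ~ reach_in setT h q b.

Definition smartselect_output (B' R' : {set V}) : Prop :=
  (exists b, step1_sink b /\ B' = [set b] /\ R' = set0) \/
  [/\ (forall b, ~ step1_sink b), ~ step2_infeasible &
      exists C, greedy_reach (set0, set0, set0) (B', R', C) /\ Q \subset C].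

Definition cost (B' R' : {set V}) : K := cs * #|B'|%:R + cr * #|R'|%:R.

End Greedy.
End MSSN.

Definition eps_of {K : archiRealFieldType} (m mb : nat) : K :=
  (Num.ceil (m%:R / (mb.+1)%:R : K))%:~R - m%:R / (mb.+1)%:R.

Definition ratio_bound {K : archiRealFieldType} (m mb : nat) : K :=
  Num.max (eps_of m mb + m%:R / mb%:R)
          (m%:R / 2 * (1 + 1 / (mb * mb.+1)%:R)).

(* Main.v *)
Require Import Defs.
From HB Require Import structures.
From mathcomp Require Import all_boot all_order all_algebra.
From mathcomp Require Import zify ring lra.
Import Order.TTheory GRing.Theory Num.Theory.
Local Open Scope ring_scope.

Lemma card_has {V : finType} (Ri : {set V}) (f : V -> seq V) (s : seq V) (k : nat) :
  (forall q, q \in s -> (#|[set r in Ri | r \in f q]| <= k)%N) ->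
  (#|[set r in Ri | has (fun q => r \in f q) s]| <= size s * k)%N.
Proof.
elim: s => [|q s IH] H.
  by rewrite (_ : [set r in Ri | _] = set0) ?cards0 //; apply/setP => r; rewrite !inE andbF.
rewrite (_ : [set r in Ri | _] = [set r in Ri | r \in f q] :|: [set r in Ri | has (fun q => r \in f q) s]); last first.
  by apply/setP => r; rewrite !inE /= andb_orr.
apply: leq_trans (leq_card_setU _ _) _.
rewrite /= mulSn leq_add // ?H ?mem_head //.
by apply: IH => q' Hq'; apply: H; rewrite inE Hq' orbT.
Qed.

Lemma path_relays {V : finType} (Ri : {set V}) (q b : V) (p : seq V) (h : nat) :
  b \notin Ri -> last q p = b -> (size p <= h)%N ->
  (#|[set r in Ri | r \in p]| <= h.-1)%N.
Proof.
move=> nb; case/lastP: p => [|s x] /=.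
  move=> _ _; by rewrite (_ : [set r in Ri | _] = set0) ?cards0 //; apply/setP => r; rewrite !inE andbF.
rewrite last_rcons size_rcons => -> Hs.
apply: (@leq_trans #|[set r in s]|).
  apply: subset_leq_card; apply/subsetP => r; rewrite !inE mem_rcons inE.
  case/andP=> Hr /orP [/eqP E|//]; by move: nb; rewrite -E Hr.
rewrite cardsE; apply: leq_trans (card_size _) _; by lia.
Qed.

Lemma valid_card {V : finType} (e : rel V) (h : nat) (Qj Ri : {set V}) (b : V) Rhat :
  b \notin Ri -> valid_relays e h Qj Ri b Rhat -> (#|Rhat| <= #|Qj| * h.-1)%N.
Proof.
move=> nb [f [Hf ->]].
rewrite (_ : [set r in Ri | _] = [set r in Ri | has (fun q => r \in f q) (enum Qj)]); last first.
  apply/setP => r; rewrite !inE; congr (_ && _); apply/existsP/hasP.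
    by case=> q /andP [Hq Hr]; exists q; rewrite ?mem_enum.
  by case=> q; rewrite mem_enum => Hq Hr; exists q; rewrite Hq.
rewrite [#|Qj|]cardE; apply: card_has => q.
rewrite mem_enum => /Hf /and5P [_ /eqP Hl _ _ Hs].
exact: path_relays nb Hl Hs.
Qed.
Lemma key {K : archiRealFieldType} (cs cr : K) (mb h t U ns nb : nat) :
  0 < cs -> 0 < cr -> (mb * mb.+1 * h.-1)%:R <= cs / cr ->
  (0 < t)%N -> (0 < U)%N -> (nb <= U * h.-1)%N ->
  (cs + cr * ns%:R) / t%:R < (cs + cr * nb%:R) / U%:R ->
  (U <= t)%N \/ (mb < t)%N.
Proof.
move=> cs0 cr0 Hc t0 U0 Hnb H.
have [Ut|tU] := leqP U t; first by left.
have [mt|tm] := ltnP mb t; first by right.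
exfalso.
have t0' : (0 : K) < t%:R by rewrite ltr0n.
have U0' : (0 : K) < U%:R by rewrite ltr0n.
move: H; rewrite ltr_pdivrMr // mulrAC ltr_pdivlMr // => H.
move: Hc; rewrite ler_pdivlMr // => Hc.
set D := (mb * mb.+1)%N.
have : ((U * D)%N%:R * cs < (t * D + U * t)%N%:R * cs :> K).
  set u := (U%:R : K); set tt := (t%:R : K); set d := (D%:R : K); set hh := (h.-1%:R : K).
  have d0 : 0 < d by rewrite ltr0n /D muln_gt0; lia.
  have nb' : (nb%:R : K) <= u * hh by rewrite -natrM ler_nat.
  have ns0 : (0 : K) <= ns%:R by [].
  have a1 : u*d*cs <= d*u*(cs+cr*ns%:R).
    rewrite [d*u]mulrC ler_wpM2l ?mulr_ge0 ?ler0n // lerDl mulr_ge0 // ltW //.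
  have a2 : d*u*(cs+cr*ns%:R) < d*tt*(cs+cr*nb%:R).
    rewrite -!mulrA ltr_pM2l // mulrC [tt * _]mulrC //.
  have a3 : d*tt*(cs+cr*nb%:R) <= d*tt*(cs+cr*(u*hh)).
    rewrite ler_wpM2l ?mulr_ge0 ?ler0n // lerD2l ler_wpM2l // ltW //.
  have Hc' : d * hh * cr <= cs by rewrite /d /hh -natrM.
  have a4 : d*tt*cr*(u*hh) <= tt*u*cs.
    have : tt * u * (d * hh * cr) <= tt * u * cs by rewrite ler_wpM2l ?mulr_ge0 ?ler0n.
    apply: le_trans; rewrite le_eqVlt; apply/orP; left; apply/eqP; ring.
  rewrite natrD (natrM _ U) (natrM _ t D) (natrM _ U t) -/u -/tt -/d.
  lra.
rewrite ltr_pM2r // ltr_nat => H2.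
rewrite /D in H2; nia.
Qed.

Definition Inv {V : finType} (e : rel V) (h : nat) (Q B : {set V}) (mb : nat) (bstar : V)
  (st : gstate V) : Prop :=
  let: (P, Sr, C) := st in
  [/\ C \subset Q, (#|P| <= #|C|)%N, (#|Sr| <= #|C| * h.-1)%N,
      (forall p, p \in P -> Qset e h Q p \subset C) &
      (bstar \in B -> Q \subset Qset e h Q bstar ->
        (mb.+1 * #|P| <= #|C|)%N \/ ((mb.+1 * #|P| < #|Q| + mb.+1)%N /\ Q \subset C))].

Lemma Inv_step (K : archiRealFieldType) (V : finType) (e : rel V) (h : nat) (cs cr : K)
  (Q R B : {set V}) (mb : nat) (bstar : V) st st' :
  0 < cs -> 0 < cr -> (mb * mb.+1 * h.-1)%:R <= cs / cr -> [disjoint R & B] ->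
  Inv e h Q B mb bstar st -> greedy_step e h cs cr Q R B st st' -> Inv e h Q B mb bstar st'.
Proof.
move=> cs0 cr0 Hc dRB.
case: st => [[P Sr] C] [HCQ HPC HSr HPq HJ] [rho [bs [Hval Hcand Hmin ->]]].
set T := Qj e h Q C bs.
have HQset : forall b, Qset e h Q b \subset Q.
  by move=> b; apply/subsetP => q; rewrite inE => /andP [].
have HTQ : T \subset Q :\: C by rewrite /T /Qj setSD.
have HTC : C :&: T = set0.
  apply/setP => x; rewrite inE [x \in set0]inE; apply/negbTE; apply/negP => /andP [Hx HT].
  by move: (subsetP HTQ x HT); rewrite inE Hx.
have HcardCT : #|C :|: T| = (#|C| + #|T|)%N by rewrite cardsU HTC cards0 subn0.
move: (Hcand); rewrite /candidate => /andP [HbsB HTne].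
have T0 : (0 < #|T|)%N by rewrite card_gt0.
have nbR : forall b, b \in B -> b \notin Rset e h R b.
  move=> b Hb; apply/negP; rewrite inE => /andP [Hr _].
  by move: dRB; rewrite disjoint_subset => /subsetP /(_ b Hr); rewrite inE Hb.
have HbsB' : bs \in B by move: HbsB; rewrite inE => /andP [].
have Hrho : (#|rho bs| <= #|T| * h.-1)%N.
  exact: valid_card (nbR _ HbsB') (Hval _ Hcand).
split.
- by rewrite subUset HCQ (subset_trans HTQ) // subsetDl.
- by rewrite HcardCT cardsU1 addnC leq_add // (leq_trans (leq_b1 _) T0).
- apply: leq_trans (leq_card_setU _ _) _; rewrite HcardCT mulnDl; exact: leq_add HSr Hrho.
- move=> p; rewrite !inE => /orP [/eqP -> | Hp].
    apply/subsetP => q Hq; rewrite inE; case: (boolP (q \in C)) => //= HqC.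
    by rewrite /T /Qj inE Hq HqC.
  by apply: subset_trans (HPq _ Hp) _; apply: subsetUl.
move=> HbB HQb.
have HU : (0 < #|Q :\: C|)%N.
  by rewrite card_gt0; apply/set0Pn; case/set0Pn: HTne => x Hx; exists x; apply: (subsetP HTQ).
have HCQ' : (#|C| + #|Q :\: C| = #|Q|)%N.
  by rewrite cardsD (setIidPr HCQ) subnKC // subset_leq_card.
have HnP : bstar \notin P.
  apply/negP => /HPq HsC; move: HU; rewrite card_gt0 => /set0Pn [x].
  by rewrite inE => /andP [/negP HxC /(subsetP HQb) /(subsetP HsC)].
have HQj : Qj e h Q C bstar = Q :\: C.
  by rewrite /Qj; congr (_ :\: _); apply/eqP; rewrite eqEsubset HQset HQb.
have Hcs : candidate e h Q B P C bstar.
  by rewrite /candidate HQj inE HnP HbB -card_gt0 HU.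
have Hrs : (#|rho bstar :\: Sr| <= #|Q :\: C| * h.-1)%N.
  apply: leq_trans (subset_leq_card (subsetDl _ _)) _.
  by rewrite -HQj; exact: valid_card (nbR _ HbB) (Hval _ Hcs).
have Hkey : (#|Q :\: C| <= #|T|)%N \/ (mb < #|T|)%N.
  case: (Hmin _ Hcs) => [Hlt | [_ Hle]]; last by left; rewrite -HQj.
  move: Hlt; rewrite /Ccost -/T HQj => Hlt.
  exact: key cs0 cr0 Hc T0 HU Hrs Hlt.
have HP' : (#|bs |: P| <= #|P|.+1)%N by rewrite cardsU1 -add1n leq_add2r leq_b1.
case: Hkey => Hk.
- right; split.
  + case: (HJ HbB HQb) => [H1|[_ H2]].
      apply: leq_ltn_trans (leq_mul (leqnn mb.+1) HP') _.
      by rewrite mulnS; clear -H1 HU HCQ'; lia.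
    by exfalso; move: HU; rewrite card_gt0 => /set0Pn [x]; rewrite inE => /andP [/negP HxC /(subsetP H2)].
  + have HTe : T = Q :\: C.
      by apply/eqP; rewrite eqEcard HTQ Hk.
    by rewrite HTe; apply/subsetP => x Hx; rewrite !inE; case: (x \in C) Hx.
- left; rewrite HcardCT.
  case: (HJ HbB HQb) => [H1|[_ H2]].
    apply: leq_trans (leq_mul (leqnn mb.+1) HP') _.
    by rewrite mulnS; clear -H1 Hk; lia.
  by exfalso; move: HU; rewrite card_gt0 => /set0Pn [x]; rewrite inE => /andP [/negP HxC /(subsetP H2)].
Qed.

Lemma Inv_reach (K : archiRealFieldType) (V : finType) (e : rel V) (h : nat) (cs cr : K)
  (Q R B : {set V}) (mb : nat) (bstar : V) st st' :
  0 < cs -> 0 < cr -> (mb * mb.+1 * h.-1)%:R <= cs / cr -> [disjoint R & B] ->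
  Inv e h Q B mb bstar st -> greedy_reach e h cs cr Q R B st st' -> Inv e h Q B mb bstar st'.
Proof.
move=> cs0 cr0 Hc dRB HI Hr; elim: Hr HI => // s1 s2 s3 Hs _ IH HI.
by apply: IH; apply: Inv_step Hs.
Qed.

Lemma Inv0 {V : finType} (e : rel V) h Q B mb bstar : Inv e h Q B mb bstar (set0, set0, set0).
Proof.
split; rewrite ?cards0 ?sub0set ?muln0 //.
- by move=> p; rewrite inE.
- by move=> _ _; left.
Qed.

Lemma reach_T {V : finType} (e : rel V) (S : {set V}) k x y :
  reach_in e S k x y -> reach_in e setT k x y.
Proof.
case/existsP => n /existsP [t /and4P [H1 H2 H3 _]].
apply/existsP; exists n; apply/existsP; exists t.
have H4 : all (fun v => v \in [set: V]) (x :: val t) by apply/allP => v _; rewrite inE.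
exact/and4P.
Qed.

Theorem theorem2 (K : archiRealFieldType) (V : finType) (e : rel V)
    (Q R B : {set V}) (h : nat) (cs cr : K) (mb : nat) :
  symmetric e -> irreflexive e ->
  [disjoint Q & R] -> [disjoint Q & B] -> [disjoint R & B] ->
  Q :|: R :|: B = [set: V] ->
  (0 < h)%N -> 0 < cs -> 0 < cr ->
  (1 <= mb)%N -> (mb < #|Q|)%N ->
  cs / cr >= (mb * mb.+1 * h.-1)%:R ->
  feasible_instance e h Q R B ->
  forall B' R', smartselect_output e h cs cr Q R B B' R' ->
  forall Bo Ro, feasible_sol e h Q R B Bo Ro ->
    cost cs cr B' R' <= ratio_bound #|Q| mb * cost cs cr Bo Ro.
Proof.
move=> esym eirr dQR dQB dRB HU h0 cs0 cr0 mb1 mbQ Hc Hfeas B' R' Hout Bo Ro Hopt.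
have D0 : (0 < mb * mb.+1)%N by rewrite muln_gt0 mb1.
have mbK : (0:K) < mb%:R by rewrite ltr0n.
have DK : (0:K) < (mb * mb.+1)%:R by rewrite ltr0n.
have Hc' : cr * h.-1%:R <= cs / (mb * mb.+1)%:R.
  rewrite ler_pdivlMr //; move: Hc; rewrite ler_pdivlMr // natrM => Hc.
  by apply: le_trans Hc; rewrite le_eqVlt; apply/orP; left; apply/eqP; ring.
case: Hopt => HBoB HRoR HoptQ.
have [q0 Hq0] : exists q, q \in Q.
  by apply/set0Pn; rewrite -card_gt0; apply: leq_ltn_trans mbQ.
have HBo : (0 < #|Bo|)%N.
  by case: (HoptQ _ Hq0) => b Hb _; rewrite card_gt0; apply/set0Pn; exists b.
have Hopt_ge : cs * #|Bo|%:R <= cost cs cr Bo Ro.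
  by rewrite /cost lerDl mulr_ge0 // ltW.
set m := #|Q|.
set w1 := (eps_of m mb + m%:R / mb%:R : K).
set w2 := (m%:R / 2 * (1 + 1 / (mb * mb.+1)%:R) : K).
have HB1 : w1 <= ratio_bound m mb by rewrite /ratio_bound le_max lexx.
have HB2 : w2 <= ratio_bound m mb by rewrite /ratio_bound le_max lexx orbT.
have Hw2 : 1 <= w2.
  have a : 1 <= m%:R / 2 :> K.
    by rewrite ler_pdivlMr // mul1r ler_nat; apply: leq_ltn_trans mbQ.
  have b : 0 <= 1 / (mb * mb.+1)%:R :> K by rewrite divr_ge0 // ltW.
  rewrite /w2; have a0 := le_trans (ler01 : (0:K) <= 1) a; apply: le_trans a _; rewrite ler_peMr ?lerDl //.
have Hb0 : 0 <= (ratio_bound m mb : K).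
  have := le_trans Hw2 HB2; apply: le_trans; exact: ler01.
have fin : forall x w, 0 <= w -> x <= w * (cs * #|Bo|%:R) -> w <= ratio_bound m mb ->
    x <= ratio_bound m mb * cost cs cr Bo Ro.
  move=> x w w0 H1 H2; apply: le_trans H1 _; apply: le_trans (_ : _ <= ratio_bound m mb * (cs * #|Bo|%:R)) _.
    by rewrite ler_wpM2r // mulr_ge0 // ltW.
  by rewrite ler_wpM2l.
case: Hout => [[b [Hb [-> ->]]] | [_ _ [C [Hr HQC]]]].
  rewrite /cost cards1 cards0 mulr0 addr0 mulr1.
  apply: (fin _ 1) => //; last by apply: le_trans Hw2 HB2.
  by rewrite mul1r ler_peMr ?ler1n // ltW.
have HI := fun bstar => @Inv_reach K V e h cs cr Q R B mb bstar _ _ cs0 cr0 Hc dRB (Inv0 e h Q B mb bstar) Hr.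
case: (HI q0) => HCQ HPC HSr _ _.
have Hg : (#|B'| <= m)%N by apply: leq_trans HPC (subset_leq_card HCQ).
have Hr' : (#|R'| <= m * h.-1)%N by apply: leq_trans HSr _; rewrite leq_mul2r subset_leq_card ?orbT.
have Hcost : cost cs cr B' R' <= cs * #|B'|%:R + cs * (m%:R / (mb * mb.+1)%:R).
  rewrite /cost lerD2l.
  apply: le_trans (_ : cr * (m * h.-1)%:R <= _).
    by rewrite ler_wpM2l ?ler_nat // ltW.
  rewrite natrM mulrCA; apply: le_trans (_ : _ <= m%:R * (cs / (mb * mb.+1)%:R)) _; first by rewrite ler_wpM2l.
  by rewrite mulrCA.
have [k2|k1] := leqP 2 #|Bo|.
  apply: (fin _ w2); [by apply: le_trans Hw2; apply: le_trans (ler01 : (0:K) <= 1) _| |done].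
  apply: le_trans Hcost _.
  have Hg' : cs * #|B'|%:R <= cs * m%:R by rewrite ler_wpM2l ?ler_nat // ltW.
  have Hk : w2 * (cs * 2) <= w2 * (cs * #|Bo|%:R).
    have w20 : 0 <= w2 by apply: le_trans Hw2; exact: ler01.
    by rewrite ler_wpM2l // ler_wpM2l ?ler_nat // ltW.
  apply: le_trans Hk; rewrite (_ : w2 * (cs * 2) = cs * m%:R + cs * (m%:R / (mb * mb.+1)%:R)).
    by rewrite lerD2r.
  rewrite /w2; field.
  by rewrite addrC natr1 !pnatr_eq0 -!lt0n mb1.
have /cards1P [bstar Ebo] : #|Bo| == 1%N by rewrite eqn_leq HBo -ltnS k1.
have HbB : bstar \in B by apply: (subsetP HBoB); rewrite Ebo set11.
have HQb : Q \subset Qset e h Q bstar.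
  apply/subsetP => q Hq; case: (HoptQ _ Hq) => b; rewrite Ebo inE => /eqP -> Hrch.
  by rewrite inE Hq (@reach_T _ _ _ _ _ _ Hrch).
case: (HI bstar) => _ _ _ _ /(_ HbB HQb) HJ.
have HJ' : (mb.+1 * #|B'| < m + mb.+1)%N.
  case: HJ => [H1 | [H1 _]] //.
  have H2 := subset_leq_card HCQ; apply: leq_ltn_trans (leq_trans H1 H2) _; by rewrite -[X in (X < _)%N]addn0 ltn_add2l.
set x := m%:R / (mb.+1)%:R : K.
have Hgc : (#|B'|%:R : K) <= (Num.ceil x)%:~R.
  have : (#|B'|%:Z - 1 < Num.ceil x)%R.
    rewrite ceil_gt_int rmorphB /= rmorph1 /x ltr_pdivlMr ?ltr0n //.
    have : ((mb.+1 * #|B'|)%N%:R : K) < (m + mb.+1)%N%:R by rewrite ltr_nat.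
    rewrite natrM natrD => H; lra.
  move=> H; have : ((#|B'|%:Z)%:~R : K) <= (Num.ceil x)%:~R by rewrite ler_int -ltzD1 -ltrBlDr.
  done.
have Hw1 : w1 = (Num.ceil x)%:~R + m%:R / (mb * mb.+1)%:R.
  rewrite /w1 /eps_of -/x /x natrM; field.
  by rewrite addrC natr1 !pnatr_eq0 -!lt0n mb1.
have Hx0 : 0 <= x by rewrite /x divr_ge0.
have Hcx : x <= (Num.ceil x)%:~R by apply: ceil_ge.
have Hmd : 0 <= m%:R / (mb * mb.+1)%:R :> K by rewrite divr_ge0.
apply: (fin _ w1); [by rewrite Hw1 addr_ge0 //; exact: le_trans Hx0 Hcx | | done].
apply: le_trans Hcost _.
rewrite (_ : #|Bo| = 1%N); last by rewrite Ebo cards1.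
by rewrite mulr1 Hw1 [_ * cs]mulrC mulrDr lerD2r ler_wpM2l // ltW.
Qed.
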